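(* Let $M\subseteq\mathbb{R}^n$ be a lattice-free polyhedron given by $M=\{x\in\mathbb{R}^n:a_i\cdot x\le b_i\ \forall i\in[m]\}$ with $m\in\mathbb{N}$, $a_1,\dots,a_m\in\mathbb{R}^n\setminus\{0\}$, $b_1,\dots,b_m\in\mathbb{R}$. Then there is a nonempty subset $I\subseteq[m]$ such that $P=\{x\in\mathbb{R}^n:a_i\cdot x\le b_i\ \forall i\in I\}$ can be represented as a direct Minkowski sum $P=\Delta\oplus U$, where $U$ is a $k$-dimensional linear subspace of $\mathbb{R}^n$ with $k\in\{0,\dots,n-1\}$ and $\Delta$ is an $(n-k)$-dimensional simplex.
   Context: A set $B\subseteq\mathbb{R}^n$ is lattice-free if it is an $n$-dimensional closed convex set with $\operatorname{int}(B)\cap\mathbb{Z}^n=\emptyset$. $[m]=\{1,\dots,m\}$. A Minkowski sum $A+B$ is direct, written $A\oplus B$, if every point of $A+B$ has a unique representation $a+b$ with $a\in A$, $b\in B$. *)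

(* Defs.v *)
(* Points of R^n are row vectors 'rV[R]_n
   over an abstract R : realType, with the library's (product/sup-norm)
   topology on matrices. *)
From HB Require Import structures.
From mathcomp Require Import all_boot all_order all_algebra.
From mathcomp Require Import all_classical all_reals all_analysis.
Set Implicit Arguments. Unset Strict Implicit. Unset Printing Implicit Defensive.
Import Order.TTheory GRing.Theory Num.Theory.
Import numFieldNormedType.Exports.
Local Open Scope classical_set_scope.
Local Open Scope ring_scope.

Section Defs.
Variables (R : realType) (n : nat).
Notation vec := 'rV[R]_n.

Definition dotv (a x : vec) : R := \sum_(j < n) a 0 j * x 0 j.

Definition lattice_point (x : vec) : Prop :=
  exists z : 'I_n -> int, x = \row_j (z j)%:~R.

Definition convex_set (S : set vec) : Prop :=
  forall x y (t : R), S x -> S y -> 0 <= t -> t <= 1 -> S (t *: x + (1 - t) *: y).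

Definition aff_indep (d : nat) (p : 'I_d.+1 -> vec) : bool :=
  row_free (\matrix_(i < d) (p (lift ord0 i) - p ord0)).

Definition affdim_eq (S : set vec) (d : nat) : Prop :=
  (exists p : 'I_d.+1 -> vec, (forall i, S (p i)) /\ aff_indep p) /\
  (forall p : 'I_d.+2 -> vec, (forall i, S (p i)) -> ~~ aff_indep p).

Definition conv_pts (d : nat) (p : 'I_d.+1 -> vec) : set vec :=
  [set x | exists l : 'I_d.+1 -> R, (forall i, 0 <= l i) /\
           \sum_i l i = 1 /\ x = \sum_i l i *: p i].

Definition simplex (S : set vec) (d : nat) : Prop :=
  exists p : 'I_d.+1 -> vec, aff_indep p /\ S = conv_pts p.

Definition lattice_free (B : set vec) : Prop :=
  [/\ affdim_eq B n, closed B, convex_set B &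
      forall x, interior B x -> ~ lattice_point x].

Definition polyh (m : nat) (a : 'I_m -> vec) (b : 'I_m -> R) (I : {set 'I_m})
  : set vec := [set x | forall i, i \in I -> dotv (a i) x <= b i].

Definition direct_msum (P A B : set vec) : Prop :=
  P = [set x | exists2 y, A y & exists2 z, B z & x = y + z] /\
  forall y1 y2 z1 z2, A y1 -> A y2 -> B z1 -> B z2 ->
    y1 + z1 = y2 + z2 -> y1 = y2 /\ z1 = z2.

End Defs.

(* Main.v *)
Require Import Defs.
From HB Require Import structures.
From mathcomp Require Import all_boot all_order all_algebra.
From mathcomp Require Import all_classical all_reals all_analysis.
From mathcomp Require Import ring lra.
Import Order.TTheory GRing.Theory Num.Theory.
Import numFieldNormedType.Exports.
Local Open Scope classical_set_scope.
Local Open Scope ring_scope.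

Section Dot.
Variables (R : realType) (n : nat).
Local Notation vec := 'rV[R]_n.
Implicit Types (a x y : vec).

Lemma dotvC a x : dotv a x = dotv x a.
Proof. by rewrite /dotv; apply: eq_bigr => j _; rewrite mulrC. Qed.

Lemma dotvDr a x y : dotv a (x + y) = dotv a x + dotv a y.
Proof. by rewrite /dotv -big_split; apply: eq_bigr => j _; rewrite mxE mulrDr. Qed.

Lemma dotvZr a (t : R) x : dotv a (t *: x) = t * dotv a x.
Proof. by rewrite /dotv mulr_sumr; apply: eq_bigr => j _; rewrite mxE mulrCA. Qed.

Lemma dotv0r a : dotv a 0 = 0.
Proof. by rewrite /dotv big1 // => j _; rewrite mxE mulr0. Qed.

Lemma dotvNr a x : dotv a (- x) = - dotv a x.
Proof. by rewrite -scaleN1r dotvZr mulN1r. Qed.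

Lemma dotvBr a x y : dotv a (x - y) = dotv a x - dotv a y.
Proof. by rewrite dotvDr dotvNr. Qed.

Lemma dotvDl a x y : dotv (x + y) a = dotv x a + dotv y a.
Proof. by rewrite !(dotvC _ a) dotvDr. Qed.
Lemma dotvZl a (t : R) x : dotv (t *: x) a = t * dotv x a.
Proof. by rewrite !(dotvC _ a) dotvZr. Qed.
Lemma dotv0l a : dotv 0 a = 0.
Proof. by rewrite dotvC dotv0r. Qed.
Lemma dotvNl a x : dotv (- x) a = - dotv x a.
Proof. by rewrite !(dotvC _ a) dotvNr. Qed.
Lemma dotvBl a x y : dotv (x - y) a = dotv x a - dotv y a.
Proof. by rewrite !(dotvC _ a) dotvBr. Qed.

Lemma dotv_sumr (I : Type) (r : seq I) (P : pred I) (F : I -> vec) a :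
  dotv a (\sum_(i <- r | P i) F i) = \sum_(i <- r | P i) dotv a (F i).
Proof. exact: (big_morph (dotv a) (dotvDr a) (dotv0r a)). Qed.

Lemma dotv_suml (I : Type) (r : seq I) (P : pred I) (F : I -> vec) a :
  dotv (\sum_(i <- r | P i) F i) a = \sum_(i <- r | P i) dotv (F i) a.
Proof. rewrite dotvC dotv_sumr; apply: eq_bigr => i _; exact: dotvC. Qed.

Lemma dotv_self_gt0 x : x != 0 -> 0 < dotv x x.
Proof.
move=> x0; rewrite lt_def; apply/andP; split; last first.
  by rewrite /dotv sumr_ge0 // => j _; rewrite -expr2 sqr_ge0.
apply/eqP => H; move/eqP: x0; apply; apply/rowP => j; rewrite mxE.
have Hn : forall i : 'I_n, xpredT i -> 0 <= x 0 i * x 0 i.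
  by move=> i _; rewrite -expr2 sqr_ge0.
have := psumr_eq0P Hn H (i:=j) isT.
by move/eqP; rewrite mulf_eq0 orbb => /eqP ->.
Qed.

End Dot.

Section Gordan.
Variables (R : realType) (n m : nat).
Local Notation vec := 'rV[R]_n.

Lemma exists_large (S : {set 'I_m}) (f g : 'I_m -> R) :
  (forall i, i \in S -> 0 < g i) ->
  exists t, forall i, i \in S -> 0 < f i + t * g i.
Proof.
move=> gp; exists (1 + \sum_(j in S) `|f j| / g j) => i iS.
have gi := gp i iS.
have H1 : `|f i| / g i <= \sum_(j in S) `|f j| / g j.
  rewrite (bigD1 i) //= lerDl sumr_ge0 // => j /andP[jS _].
  by rewrite divr_ge0 // ltW // gp.
have H2 : (1 + `|f i| / g i) * g i <= (1 + \sum_(j in S) `|f j| / g j) * g i.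
  by rewrite ler_pM2r // lerD2l.
have H3 : (1 + `|f i| / g i) * g i = g i + `|f i|.
  by rewrite mulrDl mul1r divfK // gt_eqF.
have H4 : - f i <= `|f i| by rewrite -normrN ler_norm.
rewrite H3 in H2; lra.
Qed.

Definition posdep (a : 'I_m -> vec) (S : {set 'I_m}) (l : 'I_m -> R) :=
  [/\ forall i, 0 <= l i, forall i, i \notin S -> l i = 0,
      exists i, 0 < l i & \sum_i l i *: a i = 0].

Lemma sum_delta (c : 'I_m) (s : R) (a : 'I_m -> vec) :
  \sum_i ((i == c)%:R * s) *: a i = s *: a c.
Proof.
rewrite (bigD1 c) //= eqxx mul1r big1 ?addr0 // => i /negbTE ->.
by rewrite mul0r scale0r.
Qed.

Lemma gordan k : forall (a : 'I_m -> vec) (S : {set 'I_m}), (#|S| <= k)%N ->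
  (exists x, forall i, i \in S -> 0 < dotv (a i) x) \/
  (exists l, posdep a S l).
Proof.
elim: k => [|k IH] a S cardS.
  left; exists 0 => i iS.
  by move: cardS; rewrite leqn0 => /eqP/card0_eq/(_ i); rewrite iS.
have [S0|/set0Pn [c cS]] := eqVneq S finset.set0.
  by left; exists 0 => i; rewrite S0 inE.
set S' := S :\ c.
have cS' : (#|S'| <= k)%N by move: cardS; rewrite (cardsD1 c S) cS add1n ltnS.
have S'S : forall i, i \in S' -> i \in S by move=> i; rewrite inE => /andP[].
have SS' : forall i, i \in S -> i != c -> i \in S'.
  by move=> i iS ic; rewrite !inE ic iS.
have [S'0|/set0Pn [i0 i0S']] := eqVneq S' finset.set0.
  have SE : forall i, i \in S -> i = c.
    move=> i iS; apply/eqP; apply: contraT => ic.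
    by have := SS' i iS ic; rewrite S'0 inE.
  have [ac0|ac0] := eqVneq (a c) 0.
    right; exists (fun i => (i == c)%:R); split.
    - by move=> i; rewrite ler0n.
    - by move=> i iS; case: eqP => // ic; rewrite ic cS in iS.
    - by exists c; rewrite eqxx ltr01.
    - by rewrite (bigD1 c) //= ac0 scaler0 add0r big1 // => i /negbTE ->; rewrite scale0r.
  left; exists (a c) => i /SE ->; exact: dotv_self_gt0.
have [[x xpos]|[l [l0 lS [j lj] ls]]] := IH a S' cS'; last first.
  right; exists l; split => //; last by exists j.
  by move=> i iS; apply: lS; apply: contra iS; exact: S'S.
have [acx|acx] := ltP 0 (dotv (a c) x).
  left; exists x => i iS; have [->//|ic] := eqVneq i c.
  exact: xpos (SS' i iS ic).
set a' := fun i => dotv (a i) x *: a c - dotv (a c) x *: a i.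
have a'E : forall i y, dotv (a' i) y =
    dotv (a i) x * dotv (a c) y - dotv (a c) x * dotv (a i) y.
  by move=> i y; rewrite /a' dotvBl !dotvZl.
have [[y ypos]|[l [l0 lS [j lj] ls]]] := IH a' S' cS'; last first.
  right.
  exists (fun i => - dotv (a c) x * l i + (i == c)%:R * \sum_j (l j * dotv (a j) x)).
  have lpos : forall j, 0 <= l j * dotv (a j) x.
    move=> j'; have [j'S|j'S] := boolP (j' \in S').
      by rewrite mulr_ge0 // ltW // xpos.
    by rewrite lS // mul0r.
  have jS : j \in S'.
    by apply: contraT => jS; move: lj; rewrite lS // ltxx.
  have sp : 0 < \sum_j (l j * dotv (a j) x).
    rewrite (bigD1 j) //= ltr_pwDl //; first by rewrite mulr_gt0 // xpos.
    by rewrite sumr_ge0 // => j' _; exact: lpos.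
  have lc : l c = 0 by apply: lS; rewrite !inE eqxx.
  split.
  - move=> i; rewrite addr_ge0 ?mulr_ge0 ?oppr_ge0 ?ler0n ?l0 //; exact: ltW.
  - move=> i iS; have ic : i != c by apply: contra iS => /eqP ->.
    rewrite (negbTE ic) mul0r addr0 lS ?mulr0 //.
    by apply: contra iS; exact: S'S.
  - by exists c; rewrite lc mulr0 add0r eqxx mul1r.
  - under eq_bigr do rewrite scalerDl.
    rewrite big_split /= sum_delta.
    under eq_bigr do rewrite -scalerA.
    rewrite -scaler_sumr.
    have ls' : (\sum_j (l j * dotv (a j) x)) *: a c =
        dotv (a c) x *: \sum_i l i *: a i.
      have E : (\sum_j (l j * dotv (a j) x)) *: a c -
          dotv (a c) x *: \sum_i l i *: a i = \sum_i l i *: a' i.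
        rewrite scaler_suml scaler_sumr -sumrB; apply: eq_bigr => i _.
        by rewrite /a' scalerBr !scalerA [dotv (a c) x * _]mulrC.
      by apply/eqP; rewrite -subr_eq0 E ls.
    rewrite ls'.
    by rewrite scaleNr addNr.
left.
have [acx0|acxn] := eqVneq (dotv (a c) x) 0.
  have acy : 0 < dotv (a c) y.
    have := ypos i0 i0S'; rewrite a'E acx0 mul0r subr0.
    by rewrite pmulr_rgt0 // xpos.
  have [t tP] := exists_large S' (fun i => dotv (a i) y) (fun i => dotv (a i) x) xpos.
  exists (y + t *: x) => i iS; rewrite dotvDr dotvZr.
  have [->|ic] := eqVneq i c; first by rewrite acx0 mulr0 addr0.
  exact: tP (SS' i iS ic).
have acxlt : dotv (a c) x < 0 by rewrite lt_neqAle acxn.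
set y' := - dotv (a c) x *: y + dotv (a c) y *: x.
have y'E : forall i, dotv (a i) y' = dotv (a' i) y.
  move=> i; rewrite a'E /y' dotvDr !dotvZr; ring.
have ypos' : forall i, i \in S' -> 0 < dotv (a i) y'.
  by move=> i iS; rewrite y'E; exact: ypos.
have [t tP] := exists_large S' (fun i => - dotv (a i) x) (fun i => dotv (a i) y') ypos'.
exists (t *: y' - x) => i iS; rewrite dotvBr dotvZr.
have [->|ic] := eqVneq i c.
  rewrite y'E; have -> : dotv (a' c) y = 0 by rewrite a'E mulrC subrr.
  by rewrite mulr0 sub0r oppr_gt0.
by have := tP i (SS' i iS ic); rewrite addrC.
Qed.

End Gordan.

Section Latt.
Variables (R : realType) (n m : nat).
Local Notation vec := 'rV[R]_n.

Definition l1 (a : vec) := \sum_j `|a 0 j|.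

Lemma l1_ge0 a : 0 <= l1 a.
Proof. by rewrite /l1 sumr_ge0. Qed.

Lemma dot_bound (a v : vec) r : (forall j, `|v 0 j| <= r) -> `|dotv a v| <= l1 a * r.
Proof.
move=> vr; rewrite /dotv /l1 mulr_suml; apply: le_trans (ler_norm_sum _ _ _) _.
by apply: ler_sum => j _; rewrite normrM ler_wpM2l.
Qed.

Lemma entry_le_norm (v : vec) j : `|v 0 j| <= `|v|.
Proof.
have /mapP[k Hk ->] : `|v 0 j| \in [seq `|v x.1 x.2| | x : 'I_1 * 'I_n].
  by apply/mapP; exists (0, j) => //=; rewrite mem_enum.
by rewrite [leRHS]/Num.norm /= mx_normrE; apply/bigmax_geP; right => /=; exists k.
Qed.

Lemma interior_strict (a : 'I_m -> vec) b z :
  (forall i, dotv (a i) z < b i) -> interior (polyh a b [set: 'I_m]) z.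
Proof.
move=> zs; rewrite /interior.
have H : forall i, \forall x \near z, dotv (a i) x < b i.
  move=> i; apply/nbhs_normP.
  have zi := zs i.
  have l0 := l1_ge0 (a i).
  exists ((b i - dotv (a i) z) / (1 + l1 (a i))).
    by apply: divr_gt0; lra.
  move=> y /= Hy.
  have -> : y = z + (y - z) by rewrite addrC subrK.
  rewrite dotvDr.
  have Hb : `|dotv (a i) (y - z)| <= l1 (a i) * `|z - y|.
    apply: dot_bound => j; rewrite -normrN opprB; exact: entry_le_norm.
  set e := (b i - dotv (a i) z) / (1 + l1 (a i)) in Hy.
  have ee : e * (1 + l1 (a i)) = b i - dotv (a i) z.
    by rewrite /e divfK // gt_eqF //; lra.
  have H1 : l1 (a i) * `|z - y| <= l1 (a i) * e by rewrite ler_wpM2l // ltW.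
  have H2 : dotv (a i) (y - z) <= `|dotv (a i) (y - z)| by exact: ler_norm.
  have H3 : 0 < e by apply: le_lt_trans Hy.
  nra.
have HH := filter_forall (nbhs_filter z) H.
apply: (filterS _ HH) => //.
move=> x /= Hx i _; exact/ltW.
Qed.

Lemma lattice_near (a : 'I_m -> vec) b x0 d :
  (forall i, dotv (a i) x0 <= b i) -> (forall i, dotv (a i) d < 0) ->
  exists z, lattice_point z /\ forall i, dotv (a i) z < b i.
Proof.
move=> x0b dneg.
have [t tP] := @exists_large R m (finset.setT : {set 'I_m}) (fun i => - l1 (a i))
  (fun i => - dotv (a i) d) (fun i _ => ltac:(rewrite oppr_gt0; exact: dneg)).
have [y yE] : exists y, y = x0 + t *: d by eexists.
exists (\row_j ((Num.floor (y 0 j))%:~R : R)); split.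
  by exists (fun j => Num.floor (y 0 j)).
move=> i; set z := \row_j _.
have Hb : `|dotv (a i) (z - y)| <= l1 (a i) * 1.
  apply: dot_bound => j; rewrite /z !mxE.
  have h1 := Num.Theory.floor_le (y 0 j).
  have h2 := Num.Theory.floorD1_gt (y 0 j).
  rewrite intrD (_ : 1%:~R = 1) // in h2.
  move: h1 h2; set u := y 0 j; set v := (Num.floor u)%:~R => h1 h2.
  rewrite ler_norml; apply/andP; split; lra.
have -> : z = y + (z - y) by rewrite addrC subrK.
rewrite dotvDr yE dotvDr dotvZr -yE.
have H2 : dotv (a i) (z - y) <= `|dotv (a i) (z - y)| by exact: ler_norm.
have := tP i (finset.in_setT i); have := x0b i; lra.
Qed.

End Latt.

Section MinSupp.
Variables (R : realType) (n m : nat) (a : 'I_m -> 'rV[R]_n).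

Definition valid (l : 'I_m -> R) :=
  [/\ forall i, 0 <= l i, exists i, 0 < l i & \sum_i l i *: a i = 0].

Definition kern1 (l : 'I_m -> R) := forall mu : 'I_m -> R,
  (forall i, l i = 0 -> mu i = 0) -> \sum_i mu i *: a i = 0 ->
  exists t, forall i, mu i = t * l i.

Lemma argmin_ex (P : pred 'I_m) (f : 'I_m -> R) : (exists i, P i) ->
  exists i0, P i0 /\ forall i, P i -> f i0 <= f i.
Proof.
have gen : forall s : seq 'I_m, has P s ->
    exists2 i0, i0 \in s & P i0 /\ forall i, i \in s -> P i -> f i0 <= f i.
  elim => // x s IHs /=; case Px: (P x) => /=.
  - case Hs: (has P s).
    + have [y ys [Py Hy]] := IHs Hs; case: (leP (f x) (f y)) => [fxy|fyx].
        exists x; first exact: mem_head.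
        split=> // i; rewrite in_cons => /orP [/eqP->|iS] Pi //.
        exact: le_trans fxy (Hy i iS Pi).
      exists y; first by rewrite in_cons ys orbT.
      split=> // i; rewrite in_cons => /orP [/eqP->|iS] Pi; first exact: ltW.
      exact: Hy.
    + move=> _; exists x; first exact: mem_head.
      split=> // i; rewrite in_cons => /orP [/eqP->|iS] Pi //.
      by move/hasPn: Hs => /(_ i iS); rewrite Pi.
  - move=> Hs; have [y ys [Py Hy]] := IHs Hs; exists y.
      by rewrite in_cons ys orbT.
    split=> // i; rewrite in_cons => /orP [/eqP->|iS] Pi; first by rewrite Px in Pi.
    exact: Hy.
move=> [i Pi]; have [|i0 _ [Pi0 H]] := gen (enum 'I_m).
  by apply/hasP; exists i; rewrite ?mem_enum.
by exists i0; split=> // j Pj; apply: H; rewrite ?mem_enum.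
Qed.

Lemma minsupp k : forall l : 'I_m -> R, (#|[set i | l i != 0%R]%SET| <= k)%N -> valid l ->
  exists l', valid l' /\ kern1 l'.
Proof.
elim: k => [|k IH] l cl [l0 [j lj] ls].
  move: cl; rewrite leqn0 => /eqP/card0_eq/(_ j); rewrite inE.
  by rewrite (gt_eqF lj).
case: (pselect (kern1 l)) => [K|nK]; first by exists l; split => //; split => //; exists j.
have key : forall nu : 'I_m -> R, (forall i, l i = 0 -> nu i = 0) ->
    \sum_i nu i *: a i = 0 -> ~ (exists t, forall i, nu i = t * l i) ->
    (exists i, 0 < nu i) -> exists l', valid l' /\ kern1 l'.
  move=> nu ns ne nm nex.
  have [i0 [nui0 i0min]] := argmin_ex (fun i => 0 < nu i) (fun i => l i / nu i) nex.
  set t := l i0 / nu i0.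
  have t0 : 0 <= t by rewrite /t divr_ge0 // ltW.
  set l' := fun i => l i - t * nu i.
  apply: (IH l').
  - have sub : [set i | l' i != 0]%SET \proper [set i | l i != 0]%SET.
      apply/properP; split.
        apply/fintype.subsetP => i; rewrite !inE; apply: contra => /eqP li0.
        by rewrite /l' li0 (ns i li0) mulr0 subr0.
      exists i0; rewrite !inE.
        by apply/eqP => li0; move: nui0; rewrite ns // ltxx.
      by rewrite negbK /l' /t divfK ?subrr // gt_eqF.
    by have := proper_card sub => H; rewrite -ltnS (leq_trans H cl).
  - split.
    + move=> i; rewrite /l' subr_ge0.
      have [nup|nun] := ltP 0 (nu i).
        have := i0min i nup; rewrite -/t => ti.
        by rewrite -(divfK (lt0r_neq0 nup) (l i)) ler_wpM2r // ltW.
      by apply: le_trans (l0 i); rewrite mulr_ge0_le0.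
    + apply: contra_notP nm => nl'.
      have l'0 : forall i, l' i = 0.
        move=> i; apply/eqP; rewrite eq_le; apply/andP; split.
          by rewrite leNgt; apply/negP => H; apply: nl'; exists i.
        rewrite /l' subr_ge0.
        have [nup|nun] := ltP 0 (nu i).
          have := i0min i nup; rewrite -/t => ti.
          by rewrite -(divfK (lt0r_neq0 nup) (l i)) ler_wpM2r // ltW.
        by apply: le_trans (l0 i); rewrite mulr_ge0_le0.
      have lE : forall i, l i = t * nu i.
        by move=> i; apply/eqP; rewrite -subr_eq0; apply/eqP; exact: l'0.
      have tn0 : t != 0.
        by apply: contraTneq lj => t0'; rewrite lE t0' mul0r ltxx.
      by exists t^-1 => i; rewrite lE mulrA mulVf // mul1r.
    + rewrite /l'.
      under eq_bigr do rewrite scalerBl -scalerA.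
      by rewrite sumrB -scaler_sumr ne scaler0 subr0.
have [mu [ms [me mn]]] : exists mu : 'I_m -> R,
    (forall i, l i = 0 -> mu i = 0) /\ \sum_i mu i *: a i = 0 /\
    ~ (exists t, forall i, mu i = t * l i).
  apply: (contra_notP _ nK) => NQ mu ms me.
  apply: (contra_notP _ NQ) => Nt; by exists mu.
case: (pselect (exists i, 0 < mu i)) => [mp|mnp]; first exact: key mu ms me mn mp.
case: (pselect (exists i, mu i < 0)) => [mng|mnng].
  apply: (key (fun i => - mu i)).
  - by move=> i /ms ->; rewrite oppr0.
  - under eq_bigr do rewrite scaleNr.
    by rewrite sumrN me oppr0.
  - move=> [t Ht]; apply: mn; exists (- t) => i.
    by rewrite mulNr -Ht opprK.
  - by move: mng => [i Hi]; exists i; rewrite oppr_gt0.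
exfalso; apply: mn; exists 0 => i; rewrite mul0r.
apply/eqP; rewrite eq_le; apply/andP; split.
  by rewrite leNgt; apply/negP => H; apply: mnp; exists i.
by rewrite leNgt; apply/negP => H; apply: mnng; exists i.
Qed.

End MinSupp.
Lemma rowfree_ker (R : fieldType) p q (M : 'M[R]_(p, q)) :
  (forall x : 'rV_p, x *m M = 0 -> x = 0) -> row_free M.
Proof.
move=> H; rewrite -kermx_eq0; apply/eqP/row_matrixP => i; rewrite row0.
by apply: H; apply/sub_kermxP; exact: row_sub.
Qed.

Section Geo.
Variables (R : realType) (n : nat).
Local Notation vec := 'rV[R]_n.

Lemma geo (d : nat) (c : 'I_d.+1 -> vec) (lam beta : 'I_d.+1 -> R) :
  (forall j, 0 < lam j) -> \sum_j lam j *: c j = 0 ->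
  0 < \sum_j lam j * beta j ->
  row_free (\matrix_(i < d) c (lift ord0 i)) ->
  exists (U : {vspace vec}) (D : set vec),
    [/\ \dim U = (n - d)%N, simplex D d &
      direct_msum [set x | forall j, dotv (c j) x <= beta j] D [set u | u \in U]].
Proof.
move=> lp cs B0p rf.
set C := \matrix_(i < d) c (lift ord0 i).
have [B CB] := row_freeP rf.
set w : 'I_d -> vec := fun k => \row_j B j k.
have cw : forall i k : 'I_d, dotv (c (lift ord0 i)) (w k) = (i == k)%:R.
  move=> i k; have := congr1 (fun M : 'M[R]_d => M i k) CB; rewrite !mxE => <-.
  by apply: eq_bigr => j _; rewrite !mxE.
set B0 := \sum_j lam j * beta j.
have rel : forall x, lam ord0 * dotv (c ord0) x =
    - \sum_(i < d) lam (lift ord0 i) * dotv (c (lift ord0 i)) x.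
  move=> x; apply/eqP; rewrite -addr_eq0; apply/eqP.
  have := congr1 (fun v => dotv v x) cs; rewrite dotv_suml dotv0l big_ord_recl.
  by under eq_bigr do rewrite dotvZl; rewrite dotvZl.
set xb := \sum_(i < d) beta (lift ord0 i) *: w i.
set p : 'I_d.+1 -> vec := fun j => xb -
  (if unlift ord0 j is Some i then (B0 / lam j) *: w i else 0).
have cl : forall (i : 'I_d) k, dotv (c (lift ord0 i)) (p k) =
    beta (lift ord0 i) - (lift ord0 i == k)%:R * (B0 / lam (lift ord0 i)).
  move=> i k; rewrite /p dotvBr /xb dotv_sumr.
  have -> : \sum_(l < d) dotv (c (lift ord0 i)) (beta (lift ord0 l) *: w l) =
      beta (lift ord0 i).
    under eq_bigr do rewrite dotvZr cw.
    rewrite (bigD1 i) //= eqxx mulr1 big1 ?addr0 // => l /negbTE.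
    by rewrite eq_sym => ->; rewrite mulr0.
  case: (unliftP ord0 k) => [k'|] ->.
    rewrite dotvZr cw (inj_eq lift_inj).
    by case: eqP => [->|_]; rewrite ?mulr1 ?mul1r ?mulr0 ?mul0r.
  by rewrite dotv0r eq_sym (negbTE (neq_lift _ _)) mul0r.
have l0 : forall j, lam j != 0 by move=> j; exact: lt0r_neq0 (lp j).
have sumL : \sum_(i < d) lam (lift ord0 i) * beta (lift ord0 i) =
    B0 - lam ord0 * beta ord0 by rewrite /B0 big_ord_recl addrC addKr.
have cp : forall j k, dotv (c j) (p k) = beta j - (j == k)%:R * (B0 / lam j).
  move=> j k; case: (unliftP ord0 j) => [i|] ->; first exact: cl.
  have E : \sum_(i < d) lam (lift ord0 i) * dotv (c (lift ord0 i)) (p k) =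
      \sum_(i < d) (lam (lift ord0 i) * beta (lift ord0 i) -
                    (lift ord0 i == k)%:R * B0).
    by apply: eq_bigr => i _; rewrite cl; field; exact: l0.
  have H := rel (p k); rewrite E sumrB sumL in H.
  apply: (mulfI (l0 ord0)); rewrite H.
  case: (unliftP ord0 k) => [k'|] ->.
    rewrite (bigD1 k') //= eqxx mul1r big1 ?addr0; last first.
      by move=> i /negbTE; rewrite (inj_eq lift_inj) => ->; rewrite mul0r.
    by ring.
  rewrite big1 ?subr0; last first.
    by move=> i _; rewrite eq_sym (negbTE (neq_lift _ _)) mul0r.
  by rewrite eqxx mul1r; field; exact: l0.
have cy : forall (l : 'I_d.+1 -> R) j, \sum_k l k = 1 ->
    dotv (c j) (\sum_k l k *: p k) = beta j - l j * (B0 / lam j).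
  move=> l j s1; rewrite dotv_sumr.
  under eq_bigr do rewrite dotvZr cp mulrBr.
  rewrite sumrB -mulr_suml s1 mul1r (bigD1 j) //= eqxx mul1r big1 ?addr0 //.
  by move=> k /negbTE; rewrite eq_sym => ->; rewrite mul0r mulr0.
pose f : 'Hom(vec, 'rV[R]_d) := linfun (mulmxr C^T).
pose U := lker f.
have entry : forall u i, (u *m C^T) 0 i = dotv (c (lift ord0 i)) u.
  by move=> u i; rewrite !mxE; apply: eq_bigr => k _; rewrite !mxE mulrC.
have memU : forall u, u \in U <-> forall j, dotv (c j) u = 0.
  move=> u; rewrite memv_ker lfunE /=; split.
    move=> /eqP H j; case: (unliftP ord0 j) => [i|] ->.
      by rewrite -entry H mxE.
    have := rel u; rewrite big1 ?oppr0; last first.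
      by move=> i _; rewrite -entry H mxE mulr0.
    by move/eqP; rewrite mulf_eq0 (negbTE (l0 _)) => /eqP.
  by move=> H; apply/eqP/rowP => i; rewrite entry H mxE.
have dimU : \dim U = (n - d)%N.
  have := limg_ker_dim f fullv; rewrite capfv.
  have -> : \dim (f @: fullv) = d.
    apply/eqP; rewrite eqn_leq; apply/andP; split.
      by have := dimvS (subvf (f @: fullv)); rewrite dimvf /dim /= mul1n.
    have : (fullv <= f @: fullv)%VS.
      apply/subvP => y _.
      have -> : y = f (y *m B^T).
        by rewrite lfunE /= -mulmxA -trmx_mul CB trmx1 mulmx1.
      by apply: memv_img; exact: memvf.
    by move/dimvS; rewrite dimvf /dim /= mul1n.
  by rewrite dimvf /dim /= mul1n => H; rewrite -[in RHS]H addnK.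
exists U, (conv_pts p); split => //.
  exists p; split => //.
  rewrite /aff_indep; apply: rowfree_ker => x; rewrite mulmx_sum_row => H.
  apply/rowP => i; rewrite mxE.
  have := congr1 (dotv (c (lift ord0 i))) H; rewrite dotv_sumr dotv0r.
  under eq_bigr do rewrite rowK dotvZr dotvBr !cp.
  rewrite (bigD1 i) //= big1 ?addr0; last first.
    move=> k ki; rewrite (inj_eq lift_inj) eq_sym (negbTE ki).
    by rewrite !mul0r subr0 subrr mulr0.
  rewrite eqxx !mul0r mul1r subr0.
  have e0 : B0 / lam (lift ord0 i) != 0 by rewrite mulf_neq0 ?invr_eq0 ?l0 // lt0r_neq0.
  move/eqP; rewrite mulf_eq0 => /orP [/eqP //|].
  by rewrite addrAC subrr add0r oppr_eq0 (negbTE e0).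
split.
  rewrite predeqE => x; split.
    move=> Hx /=.
    set l := fun j => lam j * (beta j - dotv (c j) x) / B0.
    have s0 : \sum_j lam j * dotv (c j) x = 0.
      have := congr1 (fun v => dotv v x) cs; rewrite dotv_suml dotv0l.
      by under eq_bigr do rewrite dotvZl.
    have s1 : \sum_j l j = 1.
      rewrite /l -mulr_suml.
      under eq_bigr do rewrite mulrBr.
      by rewrite sumrB s0 subr0 divff // lt0r_neq0.
    exists (\sum_k l k *: p k).
      exists l; split; last by split.
      move=> j; rewrite /l /=; apply: divr_ge0; last exact: ltW.
      by apply: mulr_ge0; [exact: ltW | rewrite subr_ge0 Hx].
    exists (x - \sum_k l k *: p k); last by rewrite addrC subrK.
    rewrite /= memU => j; rewrite dotvBr cy // /l.
    by field; rewrite l0 lt0r_neq0.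
  move=> [y [l [l0' [s1 yE]]] [z zU ->]] j.
  rewrite dotvDr (proj1 (memU z) zU j) addr0 yE cy //.
  by rewrite lerBlDr lerDl mulr_ge0 // divr_ge0 // ltW.
move=> y1 y2 z1 z2 [l1 [l10 [s11 y1E]]] [l2 [l20 [s12 y2E]]] z1U z2U E.
have eql : forall j, l1 j = l2 j.
  move=> j; have := congr1 (dotv (c j)) E.
  rewrite !dotvDr (proj1 (memU _) z1U j) (proj1 (memU _) z2U j) !addr0.
  rewrite y1E y2E !cy //.
  have e0 : B0 / lam j != 0 by rewrite mulf_neq0 ?invr_eq0 ?l0 // lt0r_neq0.
  by move=> /addrI /oppr_inj /(mulIf e0).
have y12 : y1 = y2 by rewrite y1E y2E; apply: eq_bigr => k _; rewrite eql.
by split=> //; move: E; rewrite y12 => /addrI.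
Qed.

End Geo.

Theorem lemma5p3 (R : realType) (n m : nat)
  (a : 'I_m -> 'rV[R]_n) (b : 'I_m -> R) :
  (forall i, a i != 0) ->
  lattice_free (polyh a b [set: 'I_m]) ->
  exists I : {set 'I_m}, I != finset.set0 /\
    exists (k : nat) (U : {vspace 'rV[R]_n}) (D : set 'rV[R]_n),
      [/\ (k < n)%N, \dim U = k, simplex D (n - k)%N &
          direct_msum (polyh a b I) D [set u | u \in U]].
Proof.
move=> ha [[[p [pM pind]] _] _ _ hint].
have pM' : forall k i, dotv (a i) (p k) <= b i.
  by move=> k i; apply: (pM k); rewrite finset.in_setT.
have cT : (#|(finset.setT : {set 'I_m})| <= m)%N by rewrite cardsT card_ord.
have [[x xpos]|[l0 [l0p _ l0ex l0s]]] := @gordan R n m m a finset.setT cT.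
  exfalso.
  have dneg : forall i, dotv (a i) (- x) < 0.
    by move=> i; rewrite dotvNr oppr_lt0; exact: xpos i (finset.in_setT i).
  have [z [zl zs]] := @lattice_near R n m a b (p ord0) (- x) (pM' ord0) dneg.
  exact: hint z (@interior_strict R n m a b z zs) zl.
have vl : @valid R n m a l0 by split.
have cl0 : (#|[set i | l0 i != 0%R]%SET| <= m)%N.
  by apply: leq_trans (max_card _) _; rewrite card_ord.
have [l [[lp [i0 li0] ls] K]] := @minsupp R n m a m l0 cl0 vl.
set S := [set i | l i != 0%R]%SET.
have i0S : i0 \in S by rewrite inE lt0r_neq0.
have [d Hc] : exists d, #|S| = d.+1.
  by exists #|S|.-1; rewrite prednK // card_gt0; apply/set0Pn; exists i0.
set e := enum S.
have se : size e = d.+1 by rewrite -cardE.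
pose h : 'I_d.+1 -> 'I_m := fun j => nth i0 e j.
have hS : forall j, h j \in S by move=> j; rewrite -mem_enum mem_nth // se ltn_ord.
have hinj : injective h.
  move=> j1 j2 /eqP; rewrite /h nth_uniq ?se ?ltn_ord ?enum_uniq // => /eqP.
  exact: ord_inj.
have hsurj : forall i, i \in S -> exists j, h j = i.
  move=> i iS; have iI : (index i e < d.+1)%N by rewrite -se index_mem mem_enum.
  by exists (Ordinal iI); rewrite /h nth_index // mem_enum.
have reidx : forall (V : zmodType) (F : 'I_m -> V),
    (forall i, i \notin S -> F i = 0) -> \sum_i F i = \sum_(j < d.+1) F (h j).
  move=> V F F0; rewrite (bigID (fun i => i \in S)) /= [X in _ + X]big1 ?addr0;
    last by move=> i /F0.
  by rewrite -big_enum (big_nth i0) -/e se big_mkord.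
have lamp : forall j, 0 < l (h j).
  by move=> j; rewrite lt_def lp andbT; move: (hS j); rewrite inE.
have cs : \sum_j l (h j) *: a (h j) = 0.
  rewrite -(reidx _ (fun i => l i *: a i)) //.
  by move=> i; rewrite inE negbK => /eqP ->; rewrite scale0r.
have dx : forall x, \sum_j l (h j) * dotv (a (h j)) x = 0.
  move=> x; have := congr1 (fun v => dotv v x) cs; rewrite dotv_suml dotv0l.
  by under eq_bigr do rewrite dotvZl.
have key : forall x, (forall i, dotv (a i) x <= b i) ->
    \sum_j l (h j) * (b (h j) - dotv (a (h j)) x) = \sum_j l (h j) * b (h j).
  move=> x Hx; under eq_bigr do rewrite mulrBr.
  by rewrite sumrB dx subr0.
have B0p : 0 < \sum_j l (h j) * b (h j).
  have ge : 0 <= \sum_j l (h j) * b (h j).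
    rewrite -(key (p ord0) (pM' ord0)) sumr_ge0 // => j _.
    by apply: mulr_ge0; [exact: ltW | rewrite subr_ge0].
  rewrite lt_def ge andbT; apply/eqP => B00.
  have Hb : forall k, dotv (a (h ord0)) (p k) = b (h ord0).
    move=> k; have Hn : forall j : 'I_d.+1, xpredT j ->
        0 <= l (h j) * (b (h j) - dotv (a (h j)) (p k)).
      by move=> j _; apply: mulr_ge0; [exact: ltW | rewrite subr_ge0].
    have := psumr_eq0P Hn (etrans (key (p k) (pM' k)) B00) (i:=ord0) isT.
    move/eqP; rewrite mulf_eq0 (negbTE (lt0r_neq0 (lamp _))) /= subr_eq0.
    by move/eqP.
  have rfT : row_free (\matrix_(i < n) (p (lift ord0 i) - p ord0))^T.
    by rewrite row_free_unit unitmx_tr -row_free_unit.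
  have : a (h ord0) *m (\matrix_(i < n) (p (lift ord0 i) - p ord0))^T =
         0 *m (\matrix_(i < n) (p (lift ord0 i) - p ord0))^T.
    rewrite mul0mx; apply/rowP => i.
    have E : dotv (a (h ord0)) (p (lift ord0 i) - p ord0) = 0.
      by rewrite dotvBr !Hb subrr.
    move: E; rewrite /dotv => E; rewrite [X in _ = X]mxE; apply: etrans _ E.
    rewrite mxE; apply: eq_bigr => k _.
    by rewrite !mxE.
  move/(row_free_inj rfT) => /eqP; rewrite (negbTE (ha _)) //.
have rf : row_free (\matrix_(i < d) a (h (lift ord0 i))).
  apply: rowfree_ker => x xC.
  have xs : \sum_(i < d) x 0 i *: a (h (lift ord0 i)) = 0.
    by rewrite -[RHS]xC mulmx_sum_row; apply: eq_bigr => i _; rewrite rowK.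
  pose mu' : 'I_d.+1 -> R := fun j => if unlift ord0 j is Some i then x 0 i else 0.
  pose mu : 'I_m -> R :=
    fun i => if [pick j | h j == i] is Some j then mu' j else 0.
  have muh : forall j, mu (h j) = mu' j.
    move=> j; rewrite /mu; case: pickP => [j' /eqP /hinj -> //|/(_ j)].
    by rewrite eqxx.
  have mu0 : forall i, i \notin S -> mu i = 0.
    move=> i iS; rewrite /mu; case: pickP => // j /eqP hji.
    by move: iS; rewrite -hji hS.
  have [t Ht] : exists t, forall i, mu i = t * l i.
    apply: K.
  - move=> i li; apply: mu0; rewrite inE negbK li eqxx //.
  - rewrite (reidx _ (fun i => mu i *: a i)); last by move=> i /mu0 ->; rewrite scale0r.
    rewrite big_ord_recl muh /mu' unlift_none scale0r add0r -[RHS]xs.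
    by apply: eq_bigr => i _; rewrite muh /mu' liftK.
  have t0 : t = 0.
    have := Ht (h ord0); rewrite muh /mu' unlift_none => /esym/eqP.
    by rewrite mulf_eq0 (negbTE (lt0r_neq0 (lamp _))) orbF => /eqP.
  apply/rowP => i; rewrite mxE.
  by have := Ht (h (lift ord0 i)); rewrite muh /mu' liftK t0 mul0r.
have dn : (d <= n)%N.
  by have := rank_leq_col (\matrix_(i < d) a (h (lift ord0 i))); rewrite (eqP rf).
have d0 : (0 < d)%N.
  rewrite lt0n; apply/negP => /eqP d0.
  move: cs; rewrite big_ord_recl big1 ?addr0; last first.
    by move=> [k kd] _; exfalso; move: kd; rewrite d0.
  move/eqP; rewrite scaler_eq0 (negbTE (ha _)) orbF.
  by rewrite (negbTE (lt0r_neq0 (lamp _))).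
have [U [D [dimU sD dm]]] := @geo R n d (fun j => a (h j)) (fun j => l (h j))
  (fun j => b (h j)) lamp cs B0p rf.
exists S; split; first by apply/set0Pn; exists i0.
exists (n - d)%N, U, D; split => //.
- by rewrite ltn_subrL d0 /= (leq_trans d0 dn).
- by rewrite subKn.
have -> : polyh a b S = [set x | forall j, dotv (a (h j)) x <= b (h j)].
  rewrite /polyh predeqE => x /=; split => H.
    by move=> j; apply: H (hS j).
  by move=> i iS; have [j <-] := hsurj i iS; exact: H j.
exact: dm.
Qed.
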